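(* Let $d,m\ge1$, $\nu>0$, $\boldsymbol{\xi},\mathbf{y}\in\mathbb{R}^d$, $\boldsymbol{\Omega}$ a $d\times d$ positive definite matrix and $\bar{\boldsymbol{\Gamma}}$ an $m\times m$ positive definite correlation matrix. Let $\mathbf{y}_*=(\mathbf{0}^\top,\mathbf{y}^\top)^\top$, $\boldsymbol{\xi}_*=(\mathbf{0}^\top,\boldsymbol{\xi}^\top)^\top\in\mathbb{R}^{m+d}$ and $\boldsymbol{\Omega}_*=\mathrm{diag}(\bar{\boldsymbol{\Gamma}},\boldsymbol{\Omega})$. Then $$T_{d+m}(\mathbf{y}_*-\boldsymbol{\xi}_*;\boldsymbol{\Omega}_*,\nu)=T_d(\mathbf{y}-\boldsymbol{\xi};\boldsymbol{\Omega},\nu)\,T_m(\mathbf{0};\bar{\boldsymbol{\Gamma}},\nu).$$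
   Context: $T_k(\mathbf{x};\boldsymbol{\Sigma},\nu)$ denotes the cumulative distribution function, evaluated at $\mathbf{x}\in\mathbb{R}^k$, of the $k$-dimensional Student $t$ distribution with location $\mathbf{0}$, positive definite dispersion matrix $\boldsymbol{\Sigma}$ and $\nu$ degrees of freedom (i.e. of $V^{-1/2}\mathbf{X}$ with $\mathbf{X}\sim\mathcal{N}_k(\mathbf{0},\boldsymbol{\Sigma})$ independent of $V\sim\mathrm{Gamma}(\nu/2,\nu/2)$). *)

(* Defs.v *)
From HB Require Import structures.
From mathcomp Require Import all_boot all_order all_algebra.
From mathcomp Require Import all_classical all_reals all_analysis.
Set Implicit Arguments. Unset Strict Implicit. Unset Printing Implicit Defensive.
Import Order.TTheory GRing.Theory Num.Theory.
Import numFieldNormedType.Exports.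
Local Open Scope classical_set_scope.
Local Open Scope ring_scope.

Section Defs.
Variable R : realType.

Definition posdef (n : nat) (A : 'M[R]_n) : Prop :=
  A^T = A /\ forall x : 'rV[R]_n, x != 0 -> 0 < (x *m A *m x^T) 0 0.

Definition corrmat (n : nat) (A : 'M[R]_n) : Prop :=
  posdef A /\ forall i : 'I_n, A i i = 1.

(* iterated Lebesgue integral of a nonnegative f over B 0 x ... x B (k-1):
   coordinate k-1 is outermost; coordinates are stored as functions nat -> R *)
Fixpoint iint (k : nat) (B : nat -> set R) (f : (nat -> R) -> \bar R) : \bar R :=
  match k with
  | 0 => f (fun _ => 0)
  | k'.+1 => (\int[lebesgue_measure]_(t in B k')
                iint k' B (fun z => f (fun i => if i == k' then t else z i)))%E
  end.

Definition vec_of (k : nat) (z : nat -> R) : 'rV[R]_k := \row_(i < k) z i.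

Definition gauss_kernel (k : nat) (S : 'M[R]_k) (z : nat -> R) : \bar R :=
  (expR (- ((vec_of k z *m invmx S *m (vec_of k z)^T) 0 0) / 2))%:E.

Definition coord (k : nat) (x : 'rV[R]_k) (i : nat) : R :=
  oapp (fun j : 'I_k => x 0 j) 0 (insub i).

Definition Phi (k : nat) (S : 'M[R]_k) (x : 'rV[R]_k) : R :=
  fine (iint k (fun i => `]-oo, coord x i]%classic) (gauss_kernel S)) /
  fine (iint k (fun _ => setT) (gauss_kernel S)).

Definition gamma_kernel (nu v : R) : R := v `^ (nu / 2 - 1) * expR (- (nu * v) / 2).

(* T_k(x; S, nu) = P(V^{-1/2} X <= x) = E[ Phi_k(sqrt V * x; S) ],
   X ~ N_k(0,S) independent of V ~ Gamma(nu/2, nu/2) *)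
Definition tcdf (k : nat) (x : 'rV[R]_k) (S : 'M[R]_k) (nu : R) : R :=
  fine (\int[lebesgue_measure]_(v in `]0%R, +oo[%classic)
          ((gamma_kernel nu v * Phi S (Num.sqrt v *: x))%:E))%E /
  fine (\int[lebesgue_measure]_(v in `]0%R, +oo[%classic) (gamma_kernel nu v)%:E)%E.

End Defs.

(* Main.v *)
Require Import Defs.
From HB Require Import structures.
From mathcomp Require Import all_boot all_order all_algebra.
From mathcomp Require Import all_classical all_reals all_analysis.
From mathcomp Require Import zify.
Set Implicit Arguments. Unset Strict Implicit. Unset Printing Implicit Defensive.
Import Order.TTheory GRing.Theory Num.Theory.
Import numFieldNormedType.Exports.
Local Open Scope classical_set_scope.
Local Open Scope ring_scope.

Import HBNNSimple.
Section S2.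
Local Open Scope ereal_scope.

Context d (T : measurableType d) (R : realType).
Variable mu : {measure set T -> \bar R}.

Let nnint (f : T -> \bar R) := ereal_sup [set sintegral mu h |
  h in [set h : {nnsfun T >-> R} | forall x, (h x)%:E <= f x]].

Let nnint_le (k : R) (f : T -> \bar R) : (0 < k)%R ->
  nnint (fun x => k%:E * f x) <= k%:E * nnint f.
Proof.
move=> k0; apply: ge_ereal_sup => _ [h hle <-].
have ki : (0 <= k^-1)%R by rewrite invr_ge0 ltW.
pose h' := scale_nnsfun h ki.
have -> : sintegral mu h = k%:E * sintegral mu h'.
  by rewrite /h' /scale_nnsfun /= sintegralrM muleA -EFinM divff ?gt_eqF// mul1e.
apply: lee_wpmul2l; first by rewrite lee_fin ltW.
apply: ereal_sup_ubound; exists h' => //= x.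
by rewrite /= EFinM lee_pdivrMl //; exact: hle.
Qed.

Lemma integral_scale (D : set T) (f : T -> \bar R) (k : R) : (0 <= k)%R ->
  (forall x, D x -> 0 <= f x) ->
  \int[mu]_(x in D) (k%:E * f x) = k%:E * \int[mu]_(x in D) f x.
Proof.
move=> k0 f0; have [->|kp] := eqVneq k 0%R.
  by rewrite mul0e integral0_eq // => x _; rewrite mul0e.
have {kp}kp : (0 < k)%R by rewrite lt_def kp.
rewrite !ge0_integralE //; last by move=> x Dx; rewrite mule_ge0 ?lee_fin// f0.
rewrite erestrict_scale.
apply/eqP; rewrite eq_le; apply/andP; split; first exact: nnint_le.
have kip : (0 < k^-1)%R by rewrite invr_gt0.
have := @nnint_le k^-1 (fun x => k%:E * (f \_ D) x) kip.
rewrite -lee_pdivlMl //.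
congr (_ <= _); congr ereal_sup; congr image; apply/seteqP; split => h /= H x.
- by move: (H x); rewrite muleA -EFinM mulVf ?gt_eqF// mul1e.
- by rewrite muleA -EFinM mulVf ?gt_eqF// mul1e.
Qed.
End S2.

Section T.
Variable R : realType.
Implicit Types B : nat -> set R.
Local Open Scope ereal_scope.

Lemma meas_itv (a : R) : lebesgue_measure (`]-oo, a]%classic : set R) = +oo.
Proof. by rewrite lebesgue_measure_itv /= ltNyr. Qed.
Lemma meas_T : lebesgue_measure (setT : set R) = +oo.
Proof. by rewrite -set_itv_infty_infty lebesgue_measure_itv /=. Qed.

Definition upd (z : nat -> R) (j : nat) (t : R) := fun i => if i == j then t else z i.
Definition trunc (k : nat) (z : nat -> R) := fun i => if (i < k)%N then z i else 0%R.
Definition glue (m : nat) (z u : nat -> R) := fun i => if (i < m)%N then z i else u (i - m)%N.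

Lemma iint_trunc k B (f : (nat -> R) -> \bar R) :
  iint k B f = iint k B (fun z => f (trunc k z)).
Proof.
elim: k f => [|k IH] f /=.
  by congr f; apply: funext => i; rewrite /trunc ltn0.
apply: eq_integral => t _; rewrite IH [in RHS]IH; congr (iint _ _); apply: funext => z.
congr f; apply: funext => i; rewrite /trunc.
have [//|h] := ltnP i k.+1.
rewrite (_ : (i < k)%N = false); last by lia.
by rewrite (_ : i == k = false) //; apply/eqP; lia.
Qed.

Lemma iint_split m d B (f : (nat -> R) -> \bar R) :
  iint (m + d) B f =
  iint d (fun i => B (m + i)%N) (fun u => iint m B (fun z => f (glue m z u))).
Proof.
elim: d f => [|d IH] f.
  by rewrite addn0 /= iint_trunc; congr (iint _ _).
rewrite addnS /=; apply: eq_integral => t _; rewrite IH; congr iint.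
apply: funext => u; congr (iint _ _); apply: funext => z; congr f.
apply: funext => i; rewrite /glue.
have [h|h] := ltnP i m.
  by rewrite (_ : (i == (m + d)%N) = false) //; apply/eqP; lia.
by rewrite (_ : (i == (m + d)%N) = ((i - m)%N == d)) //; apply/eqP/eqP; lia.
Qed.


Lemma iint_ext k B (f g : (nat -> R) -> \bar R) :
  (forall z, f z = g z) -> iint k B f = iint k B g.
Proof. by move=> fg; rewrite (funext fg). Qed.

Lemma iint_ge0 k B (f : (nat -> R) -> \bar R) :
  (forall z, 0 <= f z) -> 0 <= iint k B f.
Proof.
elim: k f => [|k IH] f f0 //=; apply: integral_ge0 => t _; exact: IH.
Qed.

Lemma iint_scale k B (f : (nat -> R) -> \bar R) (c : R) : (0 <= c)%R ->
  (forall z, 0 <= f z) -> iint k B (fun z => c%:E * f z) = c%:E * iint k B f.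
Proof.
move=> c0; elim: k f => [|k IH] f f0 //=.
transitivity (\int[lebesgue_measure]_(t in B k)
   (c%:E * iint k B (fun z => f (fun i => if i == k then t else z i)))).
  by apply: eq_integral => t _; rewrite IH.
by rewrite integral_scale // => t _; apply: iint_ge0.
Qed.

Lemma iint_eqB k B B' (f : (nat -> R) -> \bar R) :
  (forall i, (i < k)%N -> B i = B' i) -> iint k B f = iint k B' f.
Proof.
elim: k f => [|k IH] f hB //=.
rewrite hB //; apply: eq_integral => t _; apply: IH => i ik; apply: hB; lia.
Qed.

Lemma iint_cst_y k B :
  (forall i, (i < k)%N -> measurable (B i) /\ lebesgue_measure (B i) = +oo) ->
  iint k B (fun _ => +oo) = +oo.
Proof.
elim: k => [|k IH] hB //=.
rewrite IH; last by move=> i ik; apply: hB; lia.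
have [mB mBy] := hB k (ltnSn k).
apply: eq_trans (integral_cst lebesgue_measure mB (+oo : \bar R)) _.
exact: (congr1 (fun x => +oo * x) mBy).
Qed.

Lemma fine_scale (r : R) (x : \bar R) : fine (r%:E * x) = (r * fine x)%R.
Proof.
case: x => [s| |] /=; first by [].
- have [r0|r0|->] := ltgtP r 0%R.
  + by rewrite lt0_muley ?lte_fin // mulr0.
  + by rewrite gt0_muley ?lte_fin // mulr0.
  + by rewrite mul0e mulr0.
- have [r0|r0|->] := ltgtP r 0%R.
  + by rewrite lt0_muleNy ?lte_fin // mulr0.
  + by rewrite gt0_muleNy ?lte_fin // mulr0.
  + by rewrite mul0e mulr0.
Qed.

Lemma fine_J d B (c : \bar R) (f : (nat -> R) -> \bar R) : 0 <= c ->
  (forall u, 0 < f u) ->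
  (forall i, (i < d)%N -> measurable (B i) /\ lebesgue_measure (B i) = +oo) ->
  fine (iint d B (fun u => c * f u)) = (fine c * fine (iint d B f))%R.
Proof.
move=> c0 f0 hB; case: c c0 => [r| |] //= r0.
  by rewrite iint_scale // ?fine_scale // => z; rewrite ltW.
rewrite mul0r (_ : (fun u => +oo * f u) = fun _ => +oo).
  by rewrite iint_cst_y.
by apply: funext => u; rewrite gt0_mulye.
Qed.

End T.

Section M.
Variable R : realType.
Local Open Scope ring_scope.

Lemma posdef_unit n (A : 'M[R]_n) : posdef A -> A \in unitmx.
Proof.
move=> [_ pos]; rewrite unitmxE unitfE; apply/negP => /det0P [v v0 vA].
by have := pos v v0; rewrite vA mul0mx mxE ltxx.
Qed.

Lemma invmx_block m d (G : 'M[R]_m) (O : 'M[R]_d) :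
  G \in unitmx -> O \in unitmx ->
  invmx (block_mx G 0 0 O) = block_mx (invmx G) 0 0 (invmx O).
Proof.
move=> Gu Ou.
have MN : block_mx G 0 0 O *m block_mx (invmx G) 0 0 (invmx O) = 1%:M.
  rewrite mulmx_block !mulmx0 !mul0mx !addr0 !add0r !mulmxV //.
  by rewrite -scalar_mx_block.
have Mu := (mulmx1_unit MN).1.
by rewrite -[LHS]mulmx1 -MN mulKmx.
Qed.

Lemma vec_glue m d (z u : nat -> R) :
  vec_of (m + d) (glue m z u) = row_mx (vec_of m z) (vec_of d u).
Proof.
apply/rowP => j; rewrite !mxE; case: splitP => [j' ->|k ->]; rewrite !mxE /glue /=.
  by rewrite ltn_ord.
by rewrite (_ : (m + k < m)%N = false) ?addKn //; lia.
Qed.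

Lemma quad_block m d (a : 'rV[R]_m) (b : 'rV[R]_d) P Q :
  (row_mx a b *m block_mx P 0 0 Q *m (row_mx a b)^T) 0 0 =
  (a *m P *m a^T) 0 0 + (b *m Q *m b^T) 0 0.
Proof.
by rewrite mul_row_block !mulmx0 addr0 add0r tr_row_mx mul_row_col mxE.
Qed.

Lemma gk_glue m d (G : 'M[R]_m) (O : 'M[R]_d) (z u : nat -> R) :
  G \in unitmx -> O \in unitmx ->
  gauss_kernel (block_mx G 0 0 O) (glue m z u) =
  (gauss_kernel G z * gauss_kernel O u)%E.
Proof.
move=> Gu Ou; rewrite /gauss_kernel vec_glue invmx_block // quad_block -EFinM -expRD.
by congr (expR _)%:E; rewrite opprD mulrDl.
Qed.

Lemma coord_row_l m d (w : 'rV[R]_d) i : (i < m)%N ->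
  Defs.coord (row_mx (0 : 'rV[R]_m) w) i = 0.
Proof.
move=> im; rewrite /Defs.coord; case: insubP => [j _ ji|] //= .
rewrite mxE; case: splitP => [j' _|k jk]; first by rewrite mxE.
by move: jk; rewrite ji => ?; lia.
Qed.

Lemma coord0 m i : Defs.coord (0 : 'rV[R]_m) i = 0.
Proof. by rewrite /Defs.coord; case: insubP => [j _ _|] //=; rewrite mxE. Qed.

Lemma coord_row_r m d (w : 'rV[R]_d) i :
  Defs.coord (row_mx (0 : 'rV[R]_m) w) (m + i) = Defs.coord w i.
Proof.
rewrite /Defs.coord; case: insubP => [j _ ji|hn]; case: (insubP _ i) => [j' _ ji'|hn'] /=.
- rewrite mxE; case: splitP => [l jl|l jl].
    by move: (ltn_ord l); rewrite -jl ji => ?; lia.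
  by congr (w 0 _); apply: val_inj => /=; move: jl; rewrite ji ji' => ?; lia.
- by move: (ltn_ord j) hn'; rewrite ji => ? /negP; lia.
- by move: (ltn_ord j') hn; rewrite ji' => ? /negP; lia.
- by [].
Qed.

End M.

Section P.
Variable R : realType.
Local Open Scope ring_scope.

Lemma gk_gt0 n (S : 'M[R]_n) z : (0 < gauss_kernel S z)%E.
Proof. by rewrite /gauss_kernel lte_fin expR_gt0. Qed.

Lemma split_gk m d (G : 'M[R]_m) (O : 'M[R]_d) (B : nat -> set R) :
  G \in unitmx -> O \in unitmx ->
  iint (m + d) B (gauss_kernel (block_mx G 0 0 O)) =
  iint d (fun i => B (m + i)%N) (fun u => (iint m B (gauss_kernel G) * gauss_kernel O u)%E).
Proof.
move=> Gu Ou; rewrite iint_split; apply: iint_ext => u.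
rewrite (@iint_ext _ _ _ _ (fun z => ((fine (gauss_kernel O u))%:E * gauss_kernel G z)%E)); last first.
  by move=> z; rewrite gk_glue // muleC.
rewrite iint_scale.
- by rewrite muleC.
- by rewrite /gauss_kernel /= expR_ge0.
- by move=> z; apply/ltW/gk_gt0.
Qed.

Lemma meas_ok_itv (a : R) : measurable (`]-oo, a]%classic : set R) /\
   lebesgue_measure (`]-oo, a]%classic : set R) = +oo%E.
Proof. by split; [exact: measurable_itv | exact: meas_itv]. Qed.

Lemma meas_ok_T : measurable (setT : set R) /\ lebesgue_measure (setT : set R) = +oo%E.
Proof. by split; [exact: measurableT | exact: meas_T]. Qed.

Lemma Phi_block m d (G : 'M[R]_m) (O : 'M[R]_d) (w : 'rV[R]_d) :
  G \in unitmx -> O \in unitmx ->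
  Phi (block_mx G 0 0 O) (row_mx (0 : 'rV[R]_m) w) = Phi G 0 * Phi O w.
Proof.
move=> Gu Ou; rewrite /Phi !split_gk //.
rewrite !fine_J //; try (by apply: iint_ge0 => z; apply/ltW/gk_gt0);
  try (by move=> *; exact: gk_gt0); try (by move=> *; exact: meas_ok_T);
  try (by move=> *; exact: meas_ok_itv).
have e1 : iint m (fun i => `]-oo, Defs.coord (row_mx (0 : 'rV[R]_m) w) i]%classic)
      (gauss_kernel G) =
    iint m (fun i => `]-oo, Defs.coord (0 : 'rV[R]_m) i]%classic) (gauss_kernel G).
  by apply: iint_eqB => i im; rewrite coord_row_l // coord0.
have e2 : (fun i => `]-oo, Defs.coord (row_mx (0 : 'rV[R]_m) w) (m + i)%N]%classic) =
    (fun i => `]-oo, Defs.coord w i]%classic).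
  by apply: funext => i; rewrite coord_row_r.
rewrite e1 e2 invfM.
by rewrite mulrACA.
Qed.

End P.

Local Close Scope classical_set_scope.
Local Open Scope ring_scope.

Lemma Phi_ge0 (R : realType) n (S : 'M[R]_n) x : 0 <= Phi S x.
Proof.
rewrite /Phi divr_ge0 // fine_ge0 // iint_ge0 // => z; apply/ltW/gk_gt0.
Qed.

Lemma gamma_ge0 (R : realType) (nu v : R) : 0 <= gamma_kernel nu v.
Proof. by rewrite /gamma_kernel mulr_ge0 ?powR_ge0 ?expR_ge0. Qed.

Lemma alg (R : realType) (c X F : R) : c * X / F = X / F * (c * F / F).
Proof.
have [->|F0] := eqVneq F 0%R; first by rewrite invr0 !mulr0.
by rewrite mulfK // [RHS]mulrC mulrA.
Qed.

Theorem lemma2 (R : realType) (d m : nat) (nu : R)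
    (xi y : 'rV[R]_d) (Om : 'M[R]_d) (Gb : 'M[R]_m) :
  (0 < d)%N -> (0 < m)%N -> 0 < nu -> posdef Om -> corrmat Gb ->
  tcdf (row_mx (0 : 'rV[R]_m) y - row_mx (0 : 'rV[R]_m) xi)
       (block_mx Gb 0 0 Om) nu
  = tcdf (y - xi) Om nu * tcdf (0 : 'rV[R]_m) Gb nu.
Proof.
move=> _ _ _ hO hG.
have Ou := posdef_unit hO; have Gu := posdef_unit hG.1.
rewrite opp_row_mx add_row_mx oppr0 addr0.
set w := y - xi.
rewrite /tcdf.
set c := Phi Gb 0.
have c0 : 0 <= c by apply: Phi_ge0.
rewrite (@eq_integral _ _ _ (@lebesgue_measure R) _ (fun v => (c%:E * (gamma_kernel nu v * Phi Om (Num.sqrt v *: w))%:E)%E)); last first.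
  by move=> v _; rewrite scale_row_mx scaler0 Phi_block // -EFinM mulrCA.
rewrite [X in _ = _ * (fine X / _)](@eq_integral _ _ _ (@lebesgue_measure R) _ (fun v => (c%:E * (gamma_kernel nu v)%:E)%E)); last first.
  by move=> v _; rewrite scaler0 -EFinM mulrC.
rewrite !integral_scale //; first last.
- by move=> v _; rewrite lee_fin mulr_ge0 ?gamma_ge0 ?Phi_ge0.
- by move=> v _; rewrite lee_fin gamma_ge0.
rewrite !fine_scale.
exact: alg.
Qed.
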